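(* Let $\mathcal{D}$ be the arena of a $p$-periodic graph on $V$, let $\mathcal{A}$ be an augmented arena of $\mathcal{D}$, and let $\mathcal{A}^*$ be the maximum augmented arena. Then $\mathcal{A}=\mathcal{A}^*$ if and only if for every $t\in\mathbb{Z}_p$ and $x,y\in V$ with $((t,x),([t+1]_p,y))\notin E(\mathcal{A})$ there is no $z\in\Gamma_t(x,\mathcal{D})$ such that $(t,y)$ is a shadow corner of $([t+1]_p,z)$ with respect to $\mathcal{A}$.
   Context: Let $V$ be a finite set and $p\ge 1$ an integer; $[t]_p$ denotes $t \bmod p$. A $p$-periodic graph $\mathcal{G}=(G_0,\dots,G_{p-1})^*$ is the infinite sequence of directed graphs $G_t=(V,E_{[t]_p})$ where $E_0,\dots,E_{p-1}\subseteq V\times V$ (self-loops allowed), each $G_i$ sinkless. An arena on $V$ of length $p$ is a directed graph with vertex set $\mathbb{Z}_p\times V$ (temporal nodes) all of whose edges have the form $((i,w),([i+1]_p,w'))$. The arena of $\mathcal{G}$ is the arena $\mathcal{D}$ with $((i,u),([i+1]_p,v))\in E(\mathcal{D})$ iff $(u,v)\in E_i$. Write $\Gamma_t(u,\mathcal{M})=\{v : ((t,u),([t+1]_p,v))\in E(\mathcal{M})\}$. Game: first the cop, then the robber choose vertices. In each round $t$, with cop at $c$ and robber at $r$, the cop must move to some $c'\in\Gamma_{[t]_p}(c,\mathcal{D})$; if $c'=r$ the cop wins; otherwise the robber must move to some $r'\in\Gamma_{[t]_p}(r,\mathcal{D})$ and the next round starts. A configuration $(t,c,r)$ ($t\in\mathbb{Z}_p$)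 is the state at the start of a round with index $\equiv t\pmod p$, cop at $c$, robber at $r$, cop to move; it is copwin if from it the cop can force capture in finitely many rounds against every robber strategy. An augmented arena of $\mathcal{D}$ is an arena $\mathcal{A}$ with $E(\mathcal{D})\subseteq E(\mathcal{A})$ such that for every edge $((t,x),([t+1]_p,y))\in E(\mathcal{A})$ the configuration $(t,x,y)$ is copwin. $\mathcal{A}^*$ denotes the maximum augmented arena, whose edge set is the union of the edge sets of all augmented arenas. Given an augmented arena $\mathcal{A}$, a temporal node $(t,u)$ is a shadow corner of $([t+1]_p,v)$ if $v\neq u$ and $\Gamma_t(u,\mathcal{D})\subseteq\Gamma_{[t+1]_p}(v,\mathcal{A})$. *)

(* Defs.v *)
From mathcomp Require Import all_boot.
Set Implicit Arguments. Unset Strict Implicit. Unset Printing Implicit Defensive.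

(* Time indices Z_p are represented by 'I_p; [t+1]_p is [ordS t]. *)

Definition pgraph (V : finType) (p : nat) := 'I_p -> rel V.

Definition sinkless (V : finType) (p : nat) (E : pgraph V p) : Prop :=
  forall (i : 'I_p) (u : V), exists v, E i u v.

(* An arena on V of length p: all edges have the form ((t,w),([t+1]_p,w')),
   so the arena is given by the predicate
   M t w w' <-> ((t,w),([t+1]_p,w')) \in E(M). *)
Definition arena (V : finType) (p : nat) := 'I_p -> V -> V -> Prop.

Definition arena_of (V : finType) (p : nat) (E : pgraph V p) : arena V p :=
  fun t u v => E t u v.

Definition Gamma (V : finType) (p : nat) (M : arena V p) (t : 'I_p) (u : V) : V -> Prop :=
  fun v => M t u v.

(* Configuration (t,c,r) is copwin in the game on arena D: the cop can force
   capture in finitely many rounds (least fixpoint / attractor). *)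
Inductive copwin (V : finType) (p : nat) (D : arena V p) : 'I_p -> V -> V -> Prop :=
| copwin_step (t : 'I_p) (c r c' : V) :
    Gamma D t c c' ->
    (c' = r \/ forall r', Gamma D t r r' -> copwin D (ordS t) c' r') ->
    copwin D t c r.

Definition subarena (V : finType) (p : nat) (M N : arena V p) : Prop :=
  forall t x y, M t x y -> N t x y.

Definition same_arena (V : finType) (p : nat) (M N : arena V p) : Prop :=
  forall t x y, M t x y <-> N t x y.

Definition augmented (V : finType) (p : nat) (D A : arena V p) : Prop :=
  subarena D A /\ (forall t x y, A t x y -> copwin D t x y).

Definition max_augmented (V : finType) (p : nat) (D : arena V p) : arena V p :=
  fun t x y => exists A : arena V p, augmented D A /\ A t x y.

Definition shadow_corner (V : finType) (p : nat) (D A : arena V p)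
    (t : 'I_p) (u v : V) : Prop :=
  v <> u /\ (forall w, Gamma D t u w -> Gamma A (ordS t) v w).

(* Main.v *)
Require Import Defs.
From mathcomp Require Import all_boot.
From Stdlib Require Import Classical.

Theorem theorem3 (V : finType) (p : nat) (hp : 0 < p) (E : pgraph V p)
  (hE : sinkless E) (A : arena V p) (hA : augmented (arena_of E) A) :
  same_arena A (max_augmented (arena_of E)) <->
  (forall (t : 'I_p) (x y : V), ~ A t x y ->
     ~ (exists z, Gamma (arena_of E) t x z /\
                  shadow_corner (arena_of E) A t y z)).
Proof.
  have [hsub hcw] := hA.
  split.
  - move=> hsame t x y nA [z [hxz [_ hsh]]].
    apply: nA; apply/hsame.
    exists (fun t' x' y' => A t' x' y' \/ (t' = t /\ x' = x /\ y' = y)).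
    split; last by right.
    split; first by move=> ??? h; left; apply: hsub.
    move=> t' x' y' [h|[-> [-> ->]]]; first exact: hcw.
    apply: (copwin_step hxz); right => r' hr'.
    exact: hcw (hsh _ hr').
  - move=> hcond t x y; split.
    + move=> h; exists A; split => //.
    + move=> [A' [[_ hA'] h]].
      have key : forall t c r, copwin (arena_of E) t c r -> A t c r.
        fix IH 4 => t0 c r [t1 c1 r1 c' hcc' hor].
        case: (eqVneq c' r1) => [<-|neq]; first exact: hsub.
        case: hor => [e|hor]; first by rewrite e eqxx in neq.
        apply: NNPP => nA.
        apply: (hcond t1 c1 r1 nA); exists c'; split => //.
        split; first by move=> e; rewrite e eqxx in neq.
        move=> w hw; exact: (IH _ _ _ (hor w hw)).
      exact: key (hA' _ _ _ h).
Qed.
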